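(* There is a universal constant $u<5$ such that for every context $\psi$ (and every $n$, $m$ and choice of $\Phi$), the Vapnik–Chervonenkis dimension of $\mathcal{H}_\psi$ satisfies $$\mathrm{VC}(\mathcal{H}_\psi)\le u\,(2m+1).$$
   Context: Let $X_1,\dots,X_n$ be Boolean variables; an assignment is $x\in\{0,1\}^n$. Fix a set of candidate Boolean formulas $\Phi=\{\phi_1,\dots,\phi_m\}$ over these variables. For $c\in\{0,1\}^m$ let $\phi(c)=\bigwedge_{j:\,c_j=1}\phi_j$ (the hard constraints; the empty conjunction is ''true''). For $w\in[-1,1]^m$ let $f_w(x)=\sum_{j=1}^m w_j\,\mathbb{1}[x\models\phi_j]$. A context $\psi$ is a Boolean formula over $X_1,\dots,X_n$. The MAX-SAT classifier with parameters $(c,w)$ is $h_{c,w}(x,\psi)=1$ if $x\in\arg\max_{x'\models\phi(c)\wedge\psi} f_w(x')$ (i.e. $x\models\phi(c)\wedge\psi$ and $f_w(x)\ge f_w(x')$ for all $x'\models\phi(c)\wedge\psi$), and $h_{c,w}(x,\psi)=0$ otherwise. Let $\mathcal{H}=\{h_{c,w}: c\in\{0,1\}^m, w\in[-1,1]^m\}$ and, for a fixed context $\psi$, $\mathcal{H}_\psi=\{x\mapsto h(x,\psi): h\in\mathcal{H}\}$, a class of binary classifiers on $\{0,1\}^n$. *)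

(* Defs.v *)
From HB Require Import structures.
From mathcomp Require Import all_boot all_order all_algebra.
From mathcomp Require Import boolp.
From mathcomp Require Import Rstruct.
From Stdlib Require Import Rdefinitions.
Set Implicit Arguments. Unset Strict Implicit. Unset Printing Implicit Defensive.
Import Order.TTheory GRing.Theory Num.Theory.
Local Open Scope ring_scope.

Inductive formula (n : nat) : Type :=
| FVar of 'I_n
| FTrue
| FFalse
| FNot of formula n
| FAnd of formula n & formula n
| FOr of formula n & formula n.

Definition assignment (n : nat) := {ffun 'I_n -> bool}.

Fixpoint models n (x : assignment n) (phi : formula n) : bool :=
  match phi with
  | FVar i => x i
  | FTrue => true
  | FFalse => false
  | FNot p => ~~ models x p
  | FAnd p q => models x p && models x q
  | FOr p q => models x p || models x q
  end.

Definition models_hard n m (Phi : 'I_m -> formula n) (c : 'I_m -> bool)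
  (psi : formula n) (x : assignment n) : bool :=
  [forall j, c j ==> models x (Phi j)] && models x psi.

Definition fw n m (Phi : 'I_m -> formula n) (w : 'I_m -> R) (x : assignment n) : R :=
  \sum_(j < m) w j * (models x (Phi j))%:R.

Definition maxsat_h n m (Phi : 'I_m -> formula n) (c : 'I_m -> bool) (w : 'I_m -> R)
  (x : assignment n) (psi : formula n) : bool :=
  models_hard Phi c psi x &&
  [forall x' : assignment n, models_hard Phi c psi x' ==> (fw Phi w x' <= fw Phi w x)].

Definition H_psi n m (Phi : 'I_m -> formula n) (psi : formula n)
  (h : assignment n -> bool) : Prop :=
  exists (c : 'I_m -> bool) (w : 'I_m -> R),
    (forall j, -1 <= w j <= 1) /\ (forall x, h x = maxsat_h Phi c w x psi).

Definition shatters (X : finType) (H : (X -> bool) -> Prop) (S : {set X}) : Prop :=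
  forall T : {set X}, T \subset S ->
    exists h, H h /\ forall x, x \in S -> h x = (x \in T).

Definition VCdim (X : finType) (H : (X -> bool) -> Prop) : nat :=
  \max_(S : {set X} | `[< shatters H S >]) #|S|.

(* Main.v *)
Require Import Defs.
From HB Require Import structures.
From mathcomp Require Import all_boot all_order all_algebra.
From mathcomp Require Import boolp Rstruct.
From Stdlib Require Import Rdefinitions.
Import Order.TTheory GRing.Theory Num.Theory.
Local Open Scope ring_scope.
Lemma dep (N k : nat) (F : 'I_N -> 'I_k -> R) : ltn k.+1 N ->
  exists lam : 'I_N -> R, (exists i, lam i != 0) /\ \sum_i lam i = 0 /\
    forall j, \sum_i lam i * F i j = 0.
Proof.
move=> hN.
pose A : 'M[R]_(N, 1 + k) := row_mx (const_mx 1) (\matrix_(i, j) F i j).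
have : kermx A != 0.
  rewrite kermx_eq0 /row_free; apply/negP => /eqP h.
  have := rank_leq_col A; rewrite h => hle; move: (leq_trans hN hle); by rewrite add1n ltnn.
case/rowV0Pn => v /sub_kermxP hv /rV0Pn [i0 hi0].
exists (fun i => v 0 i); split; first by exists i0.
move: hv; rewrite mul_mx_row => /eqP; rewrite row_mx_eq0 => /andP [/eqP h1 /eqP h2].
split.
  have := congr1 (fun M : 'M[R]_(1,1) => M 0 0) h1; rewrite !mxE => e; apply: etrans e.
  by apply: eq_bigr => i _; rewrite mxE mulr1.
move=> j; have := congr1 (fun M : 'M[R]_(1,k) => M 0 j) h2; rewrite !mxE => e; apply: etrans e.
by apply: eq_bigr => i _; rewrite mxE.
Qed.
Lemma radon N (lam g : 'I_N -> R) M i0 : \sum_i lam i = 0 -> \sum_i lam i * g i = 0 ->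
  (forall i, 0 < lam i -> g i = M) -> (forall i, lam i < 0 -> g i <= M) ->
  lam i0 < 0 -> g i0 < M -> False.
Proof.
move=> s1 s2 hp hn l0 g0.
have e : \sum_i ((- lam i) * (M - g i)) = 0.
  have -> : \sum_i ((- lam i) * (M - g i)) = \sum_i (lam i * g i) - M * \sum_i lam i.
    rewrite mulr_sumr -sumrB; apply: eq_bigr => i _.
    by rewrite mulrBr !mulNr opprK addrC mulrC [M * _]mulrC.
  by rewrite s1 s2 mulr0 subr0.
have nn : forall i, true -> 0 <= (- lam i) * (M - g i).
  move=> i _; case: (ltrgtP (lam i) 0) => h.
  - by apply: mulr_ge0; [rewrite oppr_ge0 ltW | rewrite subr_ge0 hn].
  - by rewrite (hp i h) subrr mulr0.
  - by rewrite h oppr0 mul0r.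
have := psumr_eq0P nn e (i := i0) isT.
move/eqP; rewrite mulf_eq0 oppr_eq0 subr_eq0 => /orP [/eqP h|/eqP h].
  by move: l0; rewrite h ltxx.
by move: g0; rewrite h ltxx.
Qed.

Lemma shatter_bound n m (Phi : 'I_m -> formula n) (psi : formula n)
  (S : {set assignment n}) : shatters (H_psi Phi psi) S -> leq #|S| m.+1.
Proof.
move=> sh; rewrite leqNgt; apply/negP => hN.
pose p := fun i : 'I_#|S| => (enum_val i : assignment n).
have pinj : injective p by move=> i1 i2 /enum_val_inj.
have pS : forall i, p i \in S by move=> i; exact: enum_valP.
pose F := fun i j => (models (p i) (Phi j))%:R : R.
have [lam [[i1 hi1] [s1 s2]]] := @dep _ _ F hN.
have hneg : exists i, lam i < 0.
  case: (pselect (exists i, lam i < 0)) => // hc.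
  have nn : forall i, true -> 0 <= lam i.
    by move=> i _; rewrite leNgt; apply/negP => h; apply: hc; exists i.
  by move: hi1; rewrite (psumr_eq0P nn s1 (i := i1) isT) eqxx.
have hpos : exists i, 0 < lam i.
  case: (pselect (exists i, 0 < lam i)) => // hc.
  have nn : forall i, true -> 0 <= - lam i.
    by move=> i _; rewrite oppr_ge0 leNgt; apply/negP => h; apply: hc; exists i.
  have s1' : \sum_i - lam i = 0 by rewrite sumrN s1 oppr0.
  by move: hi1; rewrite -oppr_eq0 (psumr_eq0P nn s1' (i := i1) isT) eqxx.
have allpsi : forall i, models (p i) psi.
  move=> i; have [h [[c [w [_ hw]]] hl]] := sh S (subxx _).
  have := hl (p i) (pS i); rewrite pS hw => /andP [/andP [_ ->] _] //.
pose T := p @: [set i | 0 < lam i].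
have TS : T \subset S by apply/subsetP => x /imsetP [i _ ->].
have [h [[c [w [_ hw]]] hl]] := sh T TS.
have hh : forall i, maxsat_h Phi c w (p i) psi = (0 < lam i).
  by move=> i; rewrite -hw hl // mem_imset // inE.
have [/existsP [b /andP [lb /forallPn [j]]] | hall] := boolP [exists i, (lam i < 0) &&
    ~~ [forall j, c j ==> models (p i) (Phi j)]].
  rewrite negb_imply => /andP [cj nb].
  apply: (@radon _ lam (fun i => F i j) 1 b s1 (s2 j) _ _ lb).
  - move=> i; rewrite -hh => /andP [/andP [/forallP /(_ j) hj _] _].
    by rewrite /F (implyP hj cj).
  - by move=> i _; rewrite /F; case: models.
  - by rewrite /F (negbTE nb) ltr01.
have [a0 la0] := hpos; have [b0 lb0] := hneg.
have hard : forall i, lam i < 0 -> models_hard Phi c psi (p i).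
  move=> i li; rewrite /models_hard allpsi andbT.
  move/existsPn: hall => /(_ i); rewrite li /= negbK //.
have := la0; rewrite -hh => /andP [ha0h /forallP ha0m].
apply: (@radon _ lam (fun i => fw Phi w (p i)) (fw Phi w (p a0)) b0 s1 _ _ _ lb0).
- under eq_bigr => i _ do rewrite /fw mulr_sumr.
  rewrite exchange_big /=; apply: big1 => j _.
  under eq_bigr => i _ do rewrite mulrCA.
  by rewrite -mulr_sumr s2 mulr0.
- move=> i; rewrite -hh => /andP [hih /forallP him].
  apply/le_anti; rewrite (implyP (ha0m _) hih).
  by rewrite (implyP (him _) ha0h).
- by move=> i li; apply: (implyP (ha0m _)); apply: hard.
- rewrite lt_neqAle (implyP (ha0m _) (hard _ lb0)) andbT.
  apply/negP => /eqP e.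
  have : maxsat_h Phi c w (p b0) psi.
    rewrite /maxsat_h hard //=; apply/forallP => x; rewrite e; exact: ha0m.
  by rewrite hh ltNge ltW.
Qed.

Theorem theorem2 :
  exists u : R, u < 5 /\
    forall (n m : nat) (Phi : 'I_m -> formula n) (psi : formula n),
      (VCdim (H_psi Phi psi))%:R <= u * (2 * m + 1)%:R.
Proof.
exists 1; split.
  by rewrite ltr1n.
move=> n m Phi psi; rewrite mul1r ler_nat.
apply: (@leq_trans m.+1).
  apply/bigmax_leqP => S /asboolP hS; exact: shatter_bound hS.
rewrite -addn1 leq_add2r; apply: leq_pmull; done.
Qed.
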